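(* Let $K$ be a field of characteristic $p>0$, $(A,\circ)$ an associative commutative $K$-algebra and $D$ a derivation of $(A,\circ)$. For integers $0\le k\le l$ define a multiplication $\square=\square_{k,l}$ on $A$ by $$a\square b=D\big(D^{p^k-1}(a)\circ D^{p^l-1}(b)+D^{p^l-1}(a)\circ D^{p^k-1}(b)\big)\ \text{ if }k\neq l,\qquad a\square b=D\big(D^{p^k-1}(a)\circ D^{p^k-1}(b)\big)\ \text{ if }k=l.$$ (i) If $k=l$, or if $p=2$ and $l=k+1$, then $(A,\square)$ is Tortken. (ii) If $k\neq l$ and $p>2$, or if $p=2$ and $l-k>1$, then there exist an associative commutative algebra $(A,\circ)$ with a derivation $D$ such that $(A,\square)$ is not Tortken.
   Context: An algebra with multiplication $\star$ is Tortken if $(a\star b)\star(c\star d)-(a\star d)\star(c\star b)=(a,b,c)\star d-(a,d,c)\star b$ for all $a,b,c,d$, where $(a,b,c)=a\star(b\star c)-(a\star b)\star c$. $D^0$ is the identity map. *)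

(* Defs.v *)
From HB Require Import structures.
From mathcomp Require Import all_boot all_order all_algebra.
Set Implicit Arguments. Unset Strict Implicit. Unset Printing Implicit Defensive.
Import GRing.Theory.
Local Open Scope ring_scope.

Definition assoc_of {V : zmodType} (m : V -> V -> V) (a b c : V) : V :=
  m a (m b c) - m (m a b) c.

Definition tortken {V : zmodType} (m : V -> V -> V) : Prop :=
  forall a b c d : V,
    m (m a b) (m c d) - m (m a d) (m c b) =
    m (assoc_of m a b c) d - m (assoc_of m a d c) b.

(* (A, mul) is an associative commutative K-algebra (not necessarily unital):
   mul is K-bilinear (left linearity + commutativity), associative, commutative. *)
Definition comm_assoc_alg {K : fieldType} {A : lmodType K} (mul : A -> A -> A)
  : Prop :=
  (forall (c : K) (x y z : A), mul (c *: x + y) z = c *: mul x z + mul y z) /\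
  (forall x y : A, mul x y = mul y x) /\
  (forall x y z : A, mul x (mul y z) = mul (mul x y) z).

Definition derivation {K : fieldType} {A : lmodType K} (mul : A -> A -> A)
  (D : A -> A) : Prop :=
  (forall (c : K) (x y : A), D (c *: x + y) = c *: D x + D y) /\
  (forall x y : A, D (mul x y) = mul (D x) y + mul x (D y)).

Definition Dpow {A : Type} (D : A -> A) (n : nat) : A -> A := iter n D.

Definition square_kl {K : fieldType} {A : lmodType K} (mul : A -> A -> A)
  (D : A -> A) (p k l : nat) (a b : A) : A :=
  if k == l then
    D (mul (Dpow D (p ^ k).-1 a) (Dpow D (p ^ k).-1 b))
  else
    D (mul (Dpow D (p ^ k).-1 a) (Dpow D (p ^ l).-1 b)
       + mul (Dpow D (p ^ l).-1 a) (Dpow D (p ^ k).-1 b)).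

(* Main.v *)
Require Import Defs.
From HB Require Import structures.
From mathcomp Require Import all_boot all_order all_algebra.
From mathcomp Require Import ring.
From mathcomp Require Import mpoly.
Import GRing.Theory.
Local Open Scope ring_scope.

Section Der.
Variables (K : fieldType) (A : lmodType K) (mul : A -> A -> A).
Hypothesis Hcalg : comm_assoc_alg mul.

Lemma mulDl' (x y z : A) : mul (x + y) z = mul x z + mul y z.
Proof. by have := Hcalg.1 1 x y z; rewrite !scale1r. Qed.
Lemma mul0l (z : A) : mul 0 z = 0.
Proof. have h := mulDl' 0 0 z; rewrite addr0 in h. by apply: (addrI (mul 0 z)); rewrite addr0 -h. Qed.
Lemma mulZl (c : K) (x z : A) : mul (c *: x) z = c *: mul x z.
Proof. by have := Hcalg.1 c x 0 z; rewrite !addr0 mul0l addr0. Qed.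
Lemma mulC (x y : A) : mul x y = mul y x. Proof. exact: Hcalg.2.1. Qed.
Lemma mulDr' (x y z : A) : mul z (x + y) = mul z x + mul z y.
Proof. by rewrite mulC mulDl' !(mulC z). Qed.
Lemma mulZr (c : K) (x z : A) : mul z (c *: x) = c *: mul z x.
Proof. by rewrite mulC mulZl mulC. Qed.

Section F.
Variable F : A -> A.
Hypothesis HF : derivation mul F.
Lemma F0 : F 0 = 0.
Proof. have h := HF.1 1 0 0; rewrite !scale1r !addr0 in h. by apply: (addrI (F 0)); rewrite addr0 -h. Qed.
Lemma FD x y : F (x + y) = F x + F y.
Proof. by have := HF.1 1 x y; rewrite !scale1r. Qed.
Lemma FZ c x : F (c *: x) = c *: F x.
Proof. by have := HF.1 c x 0; rewrite !addr0 F0 addr0. Qed.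
Lemma FM x y : F (mul x y) = mul (F x) y + mul x (F y).
Proof. exact: HF.2. Qed.
Lemma Fsum (m : nat) (G : 'I_m -> A) : F (\sum_(i < m) G i) = \sum_(i < m) F (G i).
Proof. exact: (big_morph F FD F0). Qed.

Lemma leibniz n x y : iter n F (mul x y) =
  \sum_(i < n.+1) 'C(n, i)%:R *: mul (iter i F x) (iter (n - i) F y).
Proof.
elim: n => [|n IH]; first by rewrite big_ord_recl big_ord0 /= scale1r addr0.
rewrite iterS IH Fsum.
under eq_bigr => i _ do rewrite FZ FM scalerDr.
rewrite big_split /=.
rewrite [in RHS]big_ord_recl /= bin0 scale1r.
under [in RHS]eq_bigr => i _ do rewrite /bump /= ?add0n add1n binS natrD scalerDl subSS.
rewrite big_split /= [RHS]addrC -[RHS]addrA [RHS]addrCA; congr (_ + _).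
rewrite big_ord_recl /= bin0 scale1r subn0.
rewrite [in RHS]big_ord_recr /= bin_small // scale0r addr0 [RHS]addrC; congr (_ + _).
apply: eq_bigr => i _; rewrite /bump /= add1n -[F (iter (n - _) F y)]iterS -subSn ?subSS //.
Qed.


Lemma iter_der n : (forall c x y, iter n F (c *: x + y) = c *: iter n F x + iter n F y).
Proof. by elim: n => [|n IH] c x y //=; rewrite IH HF.1. Qed.

Lemma itern_der n : (0 < n)%N -> (forall i, (0 < i < n)%N -> 'C(n, i)%:R = 0 :> K) ->
  derivation mul (iter n F).
Proof.
move=> n0 hC; split; first exact: iter_der.
move=> x y; rewrite leibniz.
case: n n0 hC => [|n] // _ hC.
rewrite big_ord_recl big_ord_recr /= bin0 binn !scale1r ?subn0 ?subnn.
rewrite big1 ?add0r ?addr0 1?addrC //.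
move=> i _; rewrite /bump /= add1n hC ?scale0r //.
by apply/andP; split => //; exact: ltn_ord.
Qed.
End F.
Lemma iter_mul (T : Type) (f : T -> T) m n x : iter (m * n) f x = iter m (iter n f) x.
Proof. elim: m => [|m IH] //=; by rewrite mulSn iterD IH. Qed.

Lemma der_ext (f g : A -> A) : (forall x, f x = g x) -> derivation mul f -> derivation mul g.
Proof. by move=> e [h1 h2]; split=> *; rewrite -!e ?h1 ?h2. Qed.

Lemma pow_der (p : nat) : p \in [pchar K] -> forall k (F : A -> A),
  derivation mul F -> derivation mul (iter (p ^ k) F).
Proof.
move=> hp k; have pr := pcharf_prime hp.
elim: k => [|k IH] F hF; first by rewrite expn0.
apply: (@der_ext (iter (p ^ k) (iter p F))).
  by move=> x; rewrite expnSr iter_mul.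
apply: IH; apply: itern_der => //; first exact: prime_gt0.
move=> i hi; have /dvdnP[m ->] := prime_dvd_bin pr hi.
by rewrite natrM (pcharf0 hp) mulr0.
Qed.
End Der.

Ltac ac_step :=
  match goal with
  | |- ?x = ?y => unify x y; reflexivity
  | |- ?t + _ = ?u + _ => unify t u; apply: (congr1 (fun w => t + w))
  | |- ?t + _ = _ => first [ rewrite [in RHS](addrCA _ t) | rewrite [in RHS](addrC _ t) ]
  end.
Ltac ac := rewrite -?addrA; repeat ac_step.

Section Unit.
Variables (K : fieldType) (A : lmodType K) (mul : A -> A -> A).
Hypothesis Hcalg : comm_assoc_alg mul.
Lemma mulA (x y z : A) : mul x (mul y z) = mul (mul x y) z. Proof. exact: Hcalg.2.2. Qed.
Let mulDl' := @mulDl' _ _ _ Hcalg. Let mul0l := @mul0l _ _ _ Hcalg. Let mulZl := @mulZl _ _ _ Hcalg. Let mulC := @mulC _ _ _ Hcalg. Let mulDr' := @mulDr' _ _ _ Hcalg. Let mulZr := @mulZr _ _ _ Hcalg.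
Definition uT' (h : comm_assoc_alg mul) : Type := (K * A)%type.
Notation uT := (uT' Hcalg).
HB.instance Definition _ := GRing.Zmodule.on uT.
Definition umul (u v : uT) : uT := (u.1 * v.1, u.1 *: v.2 + v.1 *: u.2 + mul u.2 v.2).
Definition uone : uT := (1, 0).
Lemma umulA : associative umul.
Proof.
move=> [a x] [b y] [c z]; rewrite /umul /=; congr pair; first by rewrite mulrA.
rewrite !(mulDl', mulDr', mulZl, mulZr, scalerDr, scalerA, mulA) (mulrC c a) (mulrC c b).
ac.
Qed.
Lemma umulC : commutative umul.
Proof. move=> [a x] [b y]; rewrite /umul /= mulrC mulC; congr pair; ac. Qed.
Lemma umul1 : left_id uone umul.
Proof. move=> [a x]; rewrite /umul /uone /= mul1r scale1r scaler0 mul0l !addr0 //. Qed.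
Lemma umulDl : left_distributive umul +%R.
Proof.
move=> [a x] [b y] [c z]; rewrite /umul /=; congr pair; first by rewrite mulrDl.
rewrite !(mulDl', scalerDl, scalerDr); ac.
Qed.
HB.instance Definition _ := GRing.Zmodule_isComPzRing.Build uT umulA umulC umul1 umulDl.
Definition inj (x : A) : uT := (0, x).
Lemma injD x y : inj (x + y) = inj x + inj y.
Proof. by apply: injective_projections; rewrite /= ?addr0. Qed.
Lemma injN x : inj (- x) = - inj x. Proof. by apply: injective_projections; rewrite /= ?oppr0. Qed.
Lemma injB x y : inj (x - y) = inj x - inj y. Proof. by rewrite injD injN. Qed.
Lemma injM x y : inj (mul x y) = inj x * inj y.
Proof. by apply: injective_projections; rewrite /= /umul /= ?mul0r ?scale0r ?add0r. Qed.
Lemma inj_inj : injective inj. Proof. by move=> x y []. Qed.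

End Unit.

Section Tort.
Variables (K : fieldType) (A : lmodType K) (mul : A -> A -> A).
Hypothesis Hcalg : comm_assoc_alg mul.

Lemma tortken_gen (H E F : A -> A)
 (HB : forall x y, H (x - y) = H x - H y)
 (EB : forall x y, E (x - y) = E x - E y)
 (EH : forall x, E (H x) = F x)
 (FD : forall x y, F (x + y) = F x + F y)
 (FM : forall x y, F (mul x y) = mul (F x) y + mul x (F y)) :
 tortken (fun a b => H (mul (E a) (E b))).
Proof.
have FB x y : F (x - y) = F x - F y.
  by apply/eqP; rewrite eq_sym subr_eq -FD subrK.
move=> a b c d; rewrite /assoc_of !EB !EH -!HB; congr H.
rewrite !(FB, FM, FD).
apply: (@inj_inj K A mul Hcalg).
rewrite !(injB, injD, injN, @injM _ _ _ Hcalg).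

ring.
Qed.
End Tort.

Lemma tortken_ext (A : zmodType) (m1 m2 : A -> A -> A) :
  (forall a b, m1 a b = m2 a b) -> tortken m1 -> tortken m2.
Proof. by move=> e h a b c d; have := h a b c d; rewrite /assoc_of !e. Qed.

Lemma addB_of (A : zmodType) (F : A -> A) : (forall x y, F (x + y) = F x + F y) ->
  forall x y, F (x - y) = F x - F y.
Proof. by move=> FD x y; apply/eqP; rewrite eq_sym subr_eq -FD subrK. Qed.

Lemma part1 (K : fieldType) (p : nat) (hp : p \in [pchar K]) (k l : nat) :
  (k = l \/ (p = 2%N /\ l = k.+1)) ->
     forall (A : lmodType K) (mul : A -> A -> A) (D : A -> A),
       comm_assoc_alg mul -> derivation mul D ->
       tortken (square_kl mul D p k l).
Proof.
move=> hkl A mul D Hc Hd.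
have pr := pcharf_prime hp; have p0 := prime_gt0 pr.
set q := (p ^ k)%N.
have q0 : (0 < q)%N by rewrite expn_gt0 p0.
have itD n : forall x y, iter n D (x + y) = iter n D x + iter n D y.
  by move=> x y; have := @iter_der _ _ _ _ Hd n 1 x y; rewrite !scale1r; apply.
have DD : forall x y, D (x + y) = D x + D y by exact: (itD 1%N).
case: hkl => [<- | [p2 ->]].
  apply: (@tortken_ext _ (fun a b => D (mul (iter q.-1 D a) (iter q.-1 D b)))).
    by move=> a b; rewrite /square_kl eqxx.
  apply: (@tortken_gen K A mul Hc D (iter q.-1 D) (iter q D)).
  - exact: addB_of.
  - exact: addB_of.
  - by move=> x; rewrite -iterSr prednK.
  - exact: itD.
  - exact: (@pow_der _ _ _ _ hp k _ Hd).2.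
apply: (@tortken_ext _ (fun a b => iter q.+1 D (mul (iter q.-1 D a) (iter q.-1 D b)))).
  move=> a b; rewrite /square_kl ifN; last by rewrite (ltn_eqF (ltnSn k)).
  have Fq : forall x y, iter q D (mul x y) = mul (iter q D x) y + mul x (iter q D y).
    exact: (@pow_der _ _ _ _ hp k _ Hd).2.
  rewrite /Dpow -/q.
  have -> : (p ^ k.+1).-1 = (q + q.-1)%N.
    by rewrite expnS -/q p2 mul2n -addnn -!subn1 addnBA.
  by rewrite !iterD iterS Fq addrC.
apply: (@tortken_gen K A mul Hc (iter q.+1 D) (iter q.-1 D) (iter (p ^ k.+1) D)).
- exact: addB_of.
- exact: addB_of.
- by move=> x; rewrite -iterD expnS -/q p2 mul2n -addnn addnS -addSn prednK.
- exact: itD.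
- exact: (@pow_der _ _ _ _ hp k.+1 _ Hd).2.
Qed.

Section Eig.
Variables (R : comRingType) (D : R -> R).
Hypothesis DD : forall x y, D (x + y) = D x + D y.
Hypothesis DM : forall x y, D (x * y) = D x * y + x * D y.

Lemma De0 : D 0 = 0.
Proof. by apply: (addrI (D 0)); rewrite -DD !addr0. Qed.
Lemma DeN x : D (- x) = - D x.
Proof. by apply: (addrI (D x)); rewrite -DD !subrr De0. Qed.
Lemma DeB x y : D (x - y) = D x - D y. Proof. by rewrite DD DeN. Qed.
Lemma De1 : D 1 = 0.
Proof. by apply: (addrI (D 1)); rewrite addr0 -{3}(mulr1 1) DM mulr1 mul1r. Qed.

Definition cst c := D c = 0.
Lemma cstD a b : cst a -> cst b -> cst (a + b).
Proof. by rewrite /cst DD => -> ->; rewrite addr0. Qed.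
Lemma cstB a b : cst a -> cst b -> cst (a - b).
Proof. by rewrite /cst DeB => -> ->; rewrite subr0. Qed.
Lemma cstM a b : cst a -> cst b -> cst (a * b).
Proof. by rewrite /cst DM => -> ->; rewrite mulr0 mul0r addr0. Qed.
Lemma cst1 : cst 1. Proof. exact: De1. Qed.
Lemma cstX a n : cst a -> cst (a ^+ n).
Proof. by move=> ca; elim: n => [|n IH]; [exact: cst1 | rewrite exprS; exact: cstM]. Qed.
Lemma cstn n : cst n%:R.
Proof. by elim: n => [|n IH]; [exact: De0 | rewrite -addn1 natrD; apply: cstD => //; exact: cst1]. Qed.

Definition eig a l := D a = l * a.
Lemma eigM a b la lb : eig a la -> eig b lb -> eig (a * b) (la + lb).
Proof. by rewrite /eig DM => -> ->; ring. Qed.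
Lemma eigB a b l : eig a l -> eig b l -> eig (a - b) l.
Proof. by rewrite /eig DeB => -> ->; ring. Qed.
Lemma eigC c a l : cst c -> eig a l -> eig (c * a) l.
Proof. by rewrite /eig /cst DM => -> ->; ring. Qed.
Lemma iter_eig a l n : cst l -> eig a l -> iter n D a = l ^+ n * a.
Proof.
move=> cl ea; elim: n => [|n IH] /=; first by rewrite expr0 mul1r.
by rewrite IH DM cstX // mul0r add0r ea exprS; ring.
Qed.

Variables q Q : nat.
Definition phi (s t : R) : R := (s + t) * (s ^+ q.-1 * t ^+ Q.-1 + s ^+ Q.-1 * t ^+ q.-1).
Lemma cst_phi s t : cst s -> cst t -> cst (phi s t).
Proof.
move=> cs ct; rewrite /phi; apply: cstM; first exact: cstD.
by apply: cstD; apply: cstM; apply: cstX.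
Qed.
End Eig.
Arguments phi {R} q Q s t.
Arguments cst {R} D c.
Arguments eig {R} D a l.

Definition Phi {R : comRingType} (f : R -> R -> R) (X Y Z W : R) :=
  f (X + Y) (Z + W) * f X Y * f Z W - f (X + W) (Z + Y) * f X W * f Z Y
  - f (X + (Y + Z)) W * (f X (Y + Z) * f Y Z - f (X + Y) Z * f X Y)
  + f (X + (W + Z)) Y * (f X (W + Z) * f W Z - f (X + W) Z * f X W).

Section Key.
Variables (R : idomainType) (q Q : nat).
Hypotheses (q0 : (0 < q)%N) (Q0 : (0 < Q)%N).
Definition psi (s t : R) := s ^+ q * t ^+ Q + s ^+ Q * t ^+ q.
Lemma phiE s t : phi q Q s t * (s * t) = (s + t) * psi s t.
Proof.
rewrite /phi /psi; case: (q) q0 => // q' _; case: (Q) Q0 => // Q' _ /=.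
rewrite !exprS; ring.
Qed.

Lemma term3 (s1 t1 s2 t2 s3 t3 P f S : R) : f != 0 ->
  s1 * t1 * (s2 * t2) * (s3 * t3) = P * f ->
  (s1 + t1) * (s2 + t2) * (s3 + t3) = f * S ->
  phi q Q s1 t1 * phi q Q s2 t2 * phi q Q s3 t3 * P = S * (psi s1 t1 * psi s2 t2 * psi s3 t3).
Proof.
move=> fn h1 h2; apply: (mulIf fn).
have -> : phi q Q s1 t1 * phi q Q s2 t2 * phi q Q s3 t3 * P * f =
  (phi q Q s1 t1 * (s1 * t1)) * (phi q Q s2 t2 * (s2 * t2)) * (phi q Q s3 t3 * (s3 * t3)).
  by rewrite -mulrA -h1; ring.
rewrite !phiE.
have -> : (s1 + t1) * psi s1 t1 * ((s2 + t2) * psi s2 t2) * ((s3 + t3) * psi s3 t3) =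
  ((s1 + t1) * (s2 + t2) * (s3 + t3)) * (psi s1 t1 * psi s2 t2 * psi s3 t3) by ring.
by rewrite h2; ring.
Qed.

Lemma key (X Y Z W : R) :
  X + Y != 0 -> Z + W != 0 -> X + W != 0 -> Z + Y != 0 -> Y + Z != 0 ->
  X + (Y + Z) != 0 -> W + Z != 0 -> X + (W + Z) != 0 ->
  Phi (@phi R q Q) X Y Z W * (X * Y * Z * W) = (X + Y + Z + W) * Phi psi X Y Z W.
Proof.
move=> n1 n2 n3 n4 n5 n6 n7 n8.
set P := X * Y * Z * W; set S := X + Y + Z + W.
have h1 := @term3 X Y Z W (X + Y) (Z + W) P _ S (mulf_neq0 n1 n2).
have h2 := @term3 X W Z Y (X + W) (Z + Y) P _ S (mulf_neq0 n3 n4).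
have h3 := @term3 Y Z X (Y + Z) (X + (Y + Z)) W P _ S (mulf_neq0 n5 n6).
have h4 := @term3 X Y (X + Y) Z (X + (Y + Z)) W P _ S (mulf_neq0 n1 n6).
have h5 := @term3 W Z X (W + Z) (X + (W + Z)) Y P _ S (mulf_neq0 n7 n8).
have h6 := @term3 X W (X + W) Z (X + (W + Z)) Y P _ S (mulf_neq0 n3 n8).
rewrite /P /S in h1 h2 h3 h4 h5 h6.
have {}h1 := h1 (ltac:(ring)) (ltac:(ring)).
have {}h2 := h2 (ltac:(ring)) (ltac:(ring)).
have {}h3 := h3 (ltac:(ring)) (ltac:(ring)).
have {}h4 := h4 (ltac:(ring)) (ltac:(ring)).
have {}h5 := h5 (ltac:(ring)) (ltac:(ring)).
have {}h6 := h6 (ltac:(ring)) (ltac:(ring)).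
rewrite /P /S.
set f := phi q Q.
transitivity (f X Y * f Z W * f (X + Y) (Z + W) * (X * Y * Z * W)
  - f X W * f Z Y * f (X + W) (Z + Y) * (X * Y * Z * W)
  - f Y Z * f X (Y + Z) * f (X + (Y + Z)) W * (X * Y * Z * W)
  + f X Y * f (X + Y) Z * f (X + (Y + Z)) W * (X * Y * Z * W)
  + f W Z * f X (W + Z) * f (X + (W + Z)) Y * (X * Y * Z * W)
  - f X W * f (X + W) Z * f (X + (W + Z)) Y * (X * Y * Z * W)).
  rewrite /Phi; ring.
rewrite h1 h2 h3 h4 h5 h6 /Phi; ring.
Qed.
End Key.

Lemma tort_abs (R : comRingType) (m f : R -> R -> R) (a b c d X Y Z W : R)
 (e1 : m a b = f X Y * (a*b)) (e2 : m c d = f Z W * (c*d))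
 (e3 : m (m a b) (m c d) = f (X+Y) (Z+W) * (m a b * m c d))
 (e4 : m a d = f X W * (a*d)) (e5 : m c b = f Z Y * (c*b))
 (e6 : m (m a d) (m c b) = f (X+W) (Z+Y) * (m a d * m c b))
 (e7 : m b c = f Y Z * (b*c)) (e8 : m a (m b c) = f X (Y+Z) * (a * m b c))
 (e9 : m (m a b) c = f (X+Y) Z * (m a b * c))
 (e10 : m (m a (m b c) - m (m a b) c) d = f (X+(Y+Z)) W * ((m a (m b c) - m (m a b) c) * d))
 (e11 : m d c = f W Z * (d*c)) (e12 : m a (m d c) = f X (W+Z) * (a * m d c))
 (e13 : m (m a d) c = f (X+W) Z * (m a d * c))
 (e14 : m (m a (m d c) - m (m a d) c) b = f (X+(W+Z)) Y * ((m a (m d c) - m (m a d) c) * b)) :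
 m (m a b) (m c d) - m (m a d) (m c b) - (m (assoc_of m a b c) d - m (assoc_of m a d c) b)
 = Phi f X Y Z W * (a*b*c*d).
Proof. rewrite /assoc_of e3 e6 e10 e14 e8 e9 e12 e13 e1 e2 e4 e5 e7 e11 /Phi; ring. Qed.

Section Ex.
Variables (K : fieldType) (p : nat).
Hypothesis hp : p \in [pchar K].
Notation A := {mpoly K[4]}.

Definition eps : A := 'X_0 ^+ p.
Definition Dx (f : A) : A := \sum_(i < 4) (eps ^+ i * 'X_i) * f^`M(i).

Lemma mderivXj (i j : 'I_4) : ('X_j : A)^`M(i) = (j == i)%:R.
Proof.
rewrite mderivX mnm1E; case: eqP => [->|_]; last by rewrite scale0r.
have -> : (U_(i) - U_(i))%MM = 0%MM by apply/mnmP => t; rewrite mnmBE subnn mnm0E.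
by rewrite mpolyX0 scale1r.
Qed.

Lemma mderiv_eps (i : 'I_4) : eps^`M(i) = 0.
Proof.
rewrite /eps mpolyXn mderivX mulmnE natrM.
by rewrite (pcharf0 hp) mulr0 scale0r.
Qed.

Lemma comm_alg_A : comm_assoc_alg ( *%R : A -> A -> A).
Proof. by split; [move=> c x y z; rewrite mulrDl scalerAl | split; [exact: mulrC | exact: mulrA]]. Qed.

Lemma der_A : derivation ( *%R : A -> A -> A) Dx.
Proof.
split.
  move=> c x y; rewrite /Dx scaler_sumr -big_split /=; apply: eq_bigr => i _.
  by rewrite mderivD mderivZ mulrDr scalerAr.
move=> x y; rewrite /Dx mulr_suml mulr_sumr -big_split /=; apply: eq_bigr => i _.
by rewrite mderivM; ring.
Qed.

Lemma Dx_X (j : 'I_4) : Dx 'X_j = eps ^+ j * 'X_j.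
Proof.
rewrite /Dx (bigD1 j) //= mderivXj eqxx mulr1 big1 ?addr0 // => i /negPf ij.
by rewrite mderivXj eq_sym ij mulr0.
Qed.

Lemma Dx_eps : Dx eps = 0.
Proof. by rewrite /Dx big1 // => i _; rewrite mderiv_eps mulr0. Qed.

Lemma pchar_A : p \in [pchar A].
Proof. exact: (rmorph_pchar (@mpolyC 4 K) hp). Qed.

Let DxD x y : Dx (x + y) = Dx x + Dx y.
Proof. by have := (der_A).1 1 x y; rewrite !scale1r. Qed.
Let DxM x y : Dx (x * y) = Dx x * y + x * Dx y.
Proof. exact: (der_A).2. Qed.

Lemma sqE (k l : nat) (a b la lb : A) : k != l ->
  cst Dx la -> cst Dx lb -> eig Dx a la -> eig Dx b lb ->
  square_kl ( *%R : A -> A -> A) Dx p k l a b = phi (p ^ k) (p ^ l) la lb * (a * b).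
Proof.
move=> kl cla clb ea eb; rewrite /square_kl (negbTE kl) /Dpow.
rewrite !(@iter_eig _ _ DxM _ _ _ cla ea) !(@iter_eig _ _ DxM _ _ _ clb eb).
set c := la ^+ (p ^ k).-1 * lb ^+ (p ^ l).-1 + la ^+ (p ^ l).-1 * lb ^+ (p ^ k).-1.
have -> : la ^+ (p ^ k).-1 * a * (lb ^+ (p ^ l).-1 * b) + la ^+ (p ^ l).-1 * a * (lb ^+ (p ^ k).-1 * b)
  = c * (a * b) by rewrite /c; ring.
have cc : cst Dx c.
  by rewrite /c; apply: (@cstD _ _ DxD); apply: (@cstM _ _ DxM); apply: (@cstX _ _ DxM).
rewrite DxM cc mul0r add0r (@eigM _ _ DxM _ _ _ _ ea eb) /phi /c; ring.
Qed.

Lemma sqEig (k l : nat) (a b la lb : A) : k != l ->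
  cst Dx la -> cst Dx lb -> eig Dx a la -> eig Dx b lb ->
  square_kl ( *%R : A -> A -> A) Dx p k l a b = phi (p ^ k) (p ^ l) la lb * (a * b) /\
  eig Dx (square_kl ( *%R : A -> A -> A) Dx p k l a b) (la + lb).
Proof.
move=> kl cla clb ea eb; rewrite (@sqE _ _ _ _ _ _ kl cla clb ea eb); split=> //.
apply: (@eigC _ _ DxM); first exact: (@cst_phi _ _ DxD DxM).
exact: (@eigM _ _ DxM).
Qed.

Lemma tort_val (k l : nat) (a b c d X Y Z W : A) : k != l ->
  cst Dx X -> cst Dx Y -> cst Dx Z -> cst Dx W ->
  eig Dx a X -> eig Dx b Y -> eig Dx c Z -> eig Dx d W ->
  let m := square_kl ( *%R : A -> A -> A) Dx p k l in
  m (m a b) (m c d) - m (m a d) (m c b) - (m (assoc_of m a b c) d - m (assoc_of m a d c) b)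
  = Phi (phi (p ^ k) (p ^ l)) X Y Z W * (a * b * c * d).
Proof.
move=> kl cX cY cZ cW ea eb ec ed m.
have cD := @cstD _ _ DxD.
have [e1 g1] := @sqEig _ _ _ _ _ _ kl cX cY ea eb.
have [e2 g2] := @sqEig _ _ _ _ _ _ kl cZ cW ec ed.
have [e3 _] := @sqEig _ _ _ _ _ _ kl (cD _ _ cX cY) (cD _ _ cZ cW) g1 g2.
have [e4 g4] := @sqEig _ _ _ _ _ _ kl cX cW ea ed.
have [e5 g5] := @sqEig _ _ _ _ _ _ kl cZ cY ec eb.
have [e6 _] := @sqEig _ _ _ _ _ _ kl (cD _ _ cX cW) (cD _ _ cZ cY) g4 g5.
have [e7 g7] := @sqEig _ _ _ _ _ _ kl cY cZ eb ec.
have [e8 g8] := @sqEig _ _ _ _ _ _ kl cX (cD _ _ cY cZ) ea g7.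
have [e9 g9] := @sqEig _ _ _ _ _ _ kl (cD _ _ cX cY) cZ g1 ec.
rewrite -addrA in g9.
have [e10 _] := @sqEig _ _ _ _ _ _ kl (cD _ _ cX (cD _ _ cY cZ)) cW (@eigB _ _ DxD _ _ _ g8 g9) ed.
have [e11 g11] := @sqEig _ _ _ _ _ _ kl cW cZ ed ec.
have [e12 g12] := @sqEig _ _ _ _ _ _ kl cX (cD _ _ cW cZ) ea g11.
have [e13 g13] := @sqEig _ _ _ _ _ _ kl (cD _ _ cX cW) cZ g4 ec.
rewrite -addrA in g13.
have [e14 _] := @sqEig _ _ _ _ _ _ kl (cD _ _ cX (cD _ _ cW cZ)) cY (@eigB _ _ DxD _ _ _ g12 g13) eb.
exact: (@tort_abs _ m (phi (p ^ k) (p ^ l)) a b c d X Y Z W e1 e2 e3 e4 e5 e6 e7 e8 e9 e10 e11 e12 e13 e14).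
Qed.

Lemma not_tort_gen (k l : nat) (a b c d X Y Z W : A) : k != l ->
  cst Dx X -> cst Dx Y -> cst Dx Z -> cst Dx W ->
  eig Dx a X -> eig Dx b Y -> eig Dx c Z -> eig Dx d W ->
  a * b * c * d != 0 ->
  X + Y != 0 -> Z + W != 0 -> X + W != 0 -> Z + Y != 0 -> Y + Z != 0 ->
  X + (Y + Z) != 0 -> W + Z != 0 -> X + (W + Z) != 0 ->
  (X + Y + Z + W) * Phi (@psi A (p ^ k) (p ^ l)) X Y Z W != 0 ->
  ~ tortken (square_kl ( *%R : A -> A -> A) Dx p k l).
Proof.
move=> kl cX cY cZ cW ea eb ec ed nabcd n1 n2 n3 n4 n5 n6 n7 n8 nT ht.
have pr := pcharf_prime hp; have p0 := prime_gt0 pr.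
have := ht a b c d; move/eqP; rewrite -subr_eq0.
rewrite (@tort_val k l a b c d X Y Z W kl cX cY cZ cW ea eb ec ed) mulf_eq0 (negbTE nabcd) orbF.
move=> /eqP P0.
have qk : (0 < p ^ k)%N by rewrite expn_gt0 p0.
have ql : (0 < p ^ l)%N by rewrite expn_gt0 p0.
have := @key A (p ^ k) (p ^ l) qk ql X Y Z W n1 n2 n3 n4 n5 n6 n7 n8.
by rewrite P0 mul0r => /esym/eqP; rewrite (negbTE nT).
Qed.

Local Notation ev0 := (meval (fun _ : 'I_4 => (0 : K))).
Lemma nz_ev (f : A) : ev0 f != 0 -> f != 0.
Proof. by apply: contra => /eqP ->; rewrite rmorph0. Qed.
Lemma ev0_eps : ev0 eps = 0.
Proof.
have p0 := prime_gt0 (pcharf_prime hp).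
by rewrite /eps rmorphXn /= mevalXU expr0n (gtn_eqF p0).
Qed.
Lemma ev0_epsX n : (0 < n)%N -> ev0 (eps ^+ n) = 0.
Proof. by move=> n0; rewrite rmorphXn /= ev0_eps expr0n (gtn_eqF n0). Qed.
Lemma X_neq0 (i : 'I_4) : ('X_i : A) != 0.
Proof.
apply: contra (@oner_neq0 K) => /eqP h.
have := mevalXU (fun _ => (1 : K)) i.
by rewrite h rmorph0 => <-.
Qed.
Lemma eps_neq0 : eps != 0.
Proof. exact: expf_neq0 (X_neq0 _). Qed.
Lemma neq0E (x y : A) : x = y -> y != 0 -> x != 0.
Proof. by move=> ->. Qed.
Lemma natA_neq0 n : (n%:R : K) != 0 -> (n%:R : A) != 0.
Proof. by rewrite -mpolyC_nat mpolyC_eq0. Qed.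
Lemma natA_eq0 n : (n%:R : K) = 0 -> (n%:R : A) = 0.
Proof. by rewrite -mpolyC_nat => ->; rewrite raddf0. Qed.
Lemma frn n (x y : A) : (x + y) ^+ (p ^ n) = x ^+ (p ^ n) + y ^+ (p ^ n).
Proof.
have pr := pcharf_prime hp.
apply: exprDn_pchar; rewrite (eq_pnat _ (pcharf_eq pchar_A)) pnatX pnat_id //.
Qed.
Lemma cst_eps : cst Dx eps. Proof. exact: Dx_eps. Qed.
Lemma cst_1 : cst Dx 1. Proof. exact: (@cst1 _ _ DxM). Qed.
Lemma eigX (j : 'I_4) : eig Dx 'X_j (eps ^+ j). Proof. exact: Dx_X. Qed.

Lemma two_neq0 : (2 < p)%N -> (2%:R : K) != 0.
Proof.
move=> p2; apply/negP => /eqP h2.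
have h : (2 \in [pchar K]) by apply/andP; split => //; apply/eqP.
by move: h; rewrite (pcharf_eq hp) inE => /eqP e; rewrite -e in p2.
Qed.

Lemma epow (k l : nat) (m : nat) : (k <= l)%N -> (m <= p ^ (l - k))%N ->
  eps ^+ (p ^ l) = eps ^+ (p ^ k) ^+ m * (eps ^+ (p ^ k)) ^+ (p ^ (l - k) - m).
Proof.
move=> kl ml; rewrite -exprD subnKC // -exprM -expnD subnKC //.
Qed.

Lemma not_tort_odd (k l : nat) : (k < l)%N -> (2 < p)%N ->
  ~ tortken (square_kl ( *%R : A -> A -> A) Dx p k l).
Proof.
move=> kl p2.
have two := two_neq0 p2.
have pr := pcharf_prime hp; have p0 := prime_gt0 pr.
have e1 : eig Dx ('X_1 : A) eps by have := eigX 1; rewrite expr1.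
have e0 : eig Dx ('X_0 : A) 1 by have := eigX 0; rewrite expr0.
have ed := @eigM _ _ DxM _ _ _ _ e0 e1.
have c1e := @cstD _ _ DxD _ _ cst_1 cst_eps.
apply: (@not_tort_gen k l 'X_1 'X_0 'X_0 ('X_0 * 'X_1) eps 1 1 (1 + eps)
  _ cst_eps cst_1 cst_1 c1e e1 e0 e0 ed).
- by rewrite neq_ltn kl.
- by rewrite !mulf_neq0 // X_neq0.
- apply: nz_ev; rewrite !rmorphD /= ?rmorph1 ?ev0_eps ?add0r ?addr0; first [exact: oner_neq0 | exact: two].
- apply: nz_ev; rewrite !rmorphD /= ?rmorph1 ?ev0_eps ?add0r ?addr0; first [exact: oner_neq0 | exact: two].
- apply: nz_ev; rewrite !rmorphD /= ?rmorph1 ?ev0_eps ?add0r ?addr0; first [exact: oner_neq0 | exact: two].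
- apply: nz_ev; rewrite !rmorphD /= ?rmorph1 ?ev0_eps ?add0r ?addr0; first [exact: oner_neq0 | exact: two].
- apply: nz_ev; rewrite !rmorphD /= ?rmorph1 ?ev0_eps ?add0r ?addr0; first [exact: oner_neq0 | exact: two].
- apply: nz_ev; rewrite !rmorphD /= ?rmorph1 ?ev0_eps ?add0r ?addr0; first [exact: oner_neq0 | exact: two].
- apply: nz_ev; rewrite !rmorphD /= ?rmorph1 ?ev0_eps ?add0r ?addr0; first [exact: oner_neq0 | exact: two].
- apply: nz_ev; rewrite !rmorphD /= ?rmorph1 ?ev0_eps ?add0r ?addr0; first [exact: oner_neq0 | exact: two].
rewrite mulf_neq0 //.
  case: (eqVneq (3%:R : K) 0) => h3.
    apply: (@neq0E _ (2%:R * eps)).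
      transitivity ((3%:R : A) + 2%:R * eps); first by ring.
      by rewrite (natA_eq0 3 h3) add0r.
    by rewrite mulf_neq0 ?eps_neq0 ?natA_neq0.
  apply: nz_ev; rewrite !rmorphD /= ?rmorph1 ?ev0_eps ?add0r ?addr0.
  by move: h3; apply: contra => /eqP h; apply/eqP; rewrite -h; ring.
have hk3 : (3 <= p ^ (l - k))%N.
  apply: leq_trans p2 _; rewrite -{1}(expn1 p) leq_pexp2l //.
  by rewrite subn_gt0.
rewrite /Phi /psi !frn !expr1n (epow k l 3 (ltnW kl) hk3).
set U := eps ^+ (p ^ k); set Rr := U ^+ (p ^ (l - k) - 3).
apply: (@neq0E _ (U ^+ 2 * (4%:R + U * (6%:R - 8%:R*U*Rr - 6%:R*U^+2*Rr + 4%:R*U^+3*Rr^+2 - 6%:R*U^+4*Rr^+2 + 6%:R*U^+6*Rr^+3)))).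
  ring.
rewrite mulf_neq0 //; first by rewrite /U /eps !expf_neq0 // X_neq0.
apply: nz_ev; rewrite rmorphD rmorphM /= /U ev0_epsX ?expn_gt0 ?p0 // mul0r addr0 rmorph_nat.
by rewrite (_ : 4%N = 2 * 2)%N // natrM mulf_neq0.
Qed.

Lemma not_tort_two (k l : nat) : p = 2%N -> (1 < l - k)%N ->
  ~ tortken (square_kl ( *%R : A -> A -> A) Dx p k l).
Proof.
move=> p2 lk.
have pr := pcharf_prime hp; have p0 := prime_gt0 pr.
have kl : (k < l)%N by rewrite -subn_gt0; apply: ltn_trans lk.
have h2 : (2%:R : K) = 0 by rewrite -p2 (pcharf0 hp).
have e0 : eig Dx ('X_0 : A) 1 by have := eigX 0; rewrite expr0.
have e1 : eig Dx ('X_1 : A) eps by have := eigX 1; rewrite expr1.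
have e2 : eig Dx ('X_2 : A) (eps * eps) by have := eigX 2; rewrite expr2.
have e3 : eig Dx ('X_3 : A) (eps * (eps * eps)) by have := eigX 3; rewrite exprS expr2.
have cM := @cstM _ _ DxM.
have nzA (f : A) : ev0 f = 1 -> f != 0 by move=> h; apply: nz_ev; rewrite h oner_neq0.
have n1e : (1 + eps : A) != 0.
  by apply: nzA; rewrite rmorphD /= rmorph1 ev0_eps addr0.
have ne : (eps : A) != 0 := eps_neq0.
apply: (@not_tort_gen k l 'X_0 'X_1 'X_2 'X_3 1 eps (eps * eps) (eps * (eps * eps))
  _ cst_1 cst_eps (cM _ _ cst_eps cst_eps) (cM _ _ cst_eps (cM _ _ cst_eps cst_eps)) e0 e1 e2 e3).
- by rewrite neq_ltn kl.
- by rewrite !mulf_neq0 // X_neq0.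
- done.
- apply: (@neq0E _ (eps * eps * (1 + eps))); first by ring.
  by rewrite !mulf_neq0.
- by apply: nzA; rewrite !rmorphD !rmorphM /= rmorph1 ev0_eps !mul0r addr0.
- apply: (@neq0E _ (eps * (1 + eps))); first by ring.
  by rewrite !mulf_neq0.
- apply: (@neq0E _ (eps * (1 + eps))); first by ring.
  by rewrite !mulf_neq0.
- by apply: nzA; rewrite !rmorphD !rmorphM /= rmorph1 ev0_eps !mul0r !addr0.
- apply: (@neq0E _ (eps * eps * (1 + eps))); first by ring.
  by rewrite !mulf_neq0.
- by apply: nzA; rewrite !rmorphD !rmorphM /= rmorph1 ev0_eps !mul0r !addr0.
rewrite mulf_neq0 //.
  by apply: nzA; rewrite !rmorphD !rmorphM /= rmorph1 ev0_eps !mul0r !addr0.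
have hk4 : (4 <= p ^ (l - k))%N.
  by rewrite p2 (_ : 4 = 2 ^ 2)%N // leq_pexp2l.
rewrite /Phi /psi !frn !exprMn !expr1n (epow k l 4 (ltnW kl) hk4).
set U := eps ^+ (p ^ k); set Rr := U ^+ (p ^ (l - k) - 4).
apply: (@neq0E _ (U ^+ 11 * Rr * (- 3%:R + U * (-1 + -U^+1*Rr^+1 + -U^+4*Rr^+1 + U^+4*Rr^+2 + 3%:R*U^+5*Rr^+2 + U^+7*Rr^+3 + U^+9*Rr^+3 + U^+10*Rr^+3 + -U^+10*Rr^+4 + -U^+11*Rr^+3 + 3%:R*U^+11*Rr^+4 + U^+12*Rr^+4 + U^+14*Rr^+4 + U^+16*Rr^+5 + U^+17*Rr^+5 + -(3%:R)*U^+17*Rr^+6 + -U^+20*Rr^+6 + -U^+21*Rr^+7 + -U^+22*Rr^+7)))).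
  ring.
rewrite mulf_neq0 //; first by rewrite /Rr /U /eps !mulf_neq0 // !expf_neq0 // X_neq0.
apply: nz_ev; rewrite rmorphD rmorphM /= /U ev0_epsX ?expn_gt0 ?p0 // mul0r addr0 rmorphN rmorph_nat.
by rewrite (_ : 3 = 1 + 2)%N // natrD h2 addr0 oppr_eq0 oner_neq0.
Qed.
End Ex.


Theorem mainTheorem18 (K : fieldType) (p : nat) (hp : p \in [pchar K])
    (k l : nat) (hkl : (k <= l)%N) :
  ((k = l \/ (p = 2%N /\ l = k.+1)) ->
     forall (A : lmodType K) (mul : A -> A -> A) (D : A -> A),
       comm_assoc_alg mul -> derivation mul D ->
       tortken (square_kl mul D p k l))
  /\
  (((k <> l /\ (2 < p)%N) \/ (p = 2%N /\ (1 < l - k)%N)) ->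
     exists (A : lmodType K) (mul : A -> A -> A) (D : A -> A),
       comm_assoc_alg mul /\ derivation mul D /\
       ~ tortken (square_kl mul D p k l)).
Proof.
split; first exact: part1 hp k l.
move=> H.
exists {mpoly K[4]}, ( *%R ), (@Dx K p).
split; first exact: (@comm_alg_A K).
split; first exact: (@der_A K p).
case: H => [[kl p2] | [p2 lk]].
  apply: (@not_tort_odd K p hp k l) => //.
  by rewrite ltn_neqAle hkl andbT; apply/eqP.
exact: (@not_tort_two K p hp k l p2 lk).
Qed.
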